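(* In the abstract framework described in the context, assume (A4)–(A8) and the conformity condition. Then there is a constant $C>0$ independent of $p$ such that $$\|u-\Pi^\ell_p u\|_{L^2(\Omega,\Lambda^\ell)}\le C\,\varepsilon_{\ell-1}(p)\,\|u\|_{X(\Lambda^\ell)}\qquad\forall u\in\tilde X_p,\ \forall p\in\mathbb N .$$
   Context: Fix $d\ge2$, $\ell\in\{1,\dots,d-1\}$, and a bounded Lipschitz polyhedron $\Omega\subset\mathbb R^d$. $L^2(\Omega,\Lambda^k)$: $k$-forms with square-integrable coefficients, inner product $(u,v)=\int u\wedge\star v$; $\mathsf d^k$ exterior derivative; $H(\mathsf d,\Omega,\Lambda^k)=\{v\in L^2:\mathsf d^kv\in L^2\}$ (graph norm); $\mathring H(\mathsf d,\Omega,\Lambda^k)$ its subspace of forms with zero trace on $\partial\Omega$. Let $\mathcal M$ be a fixed finite partition of $\Omega$ into pairwise disjoint open polyhedral cells $K$ whose closures cover $\overline\Omega$. For each $K$ and $p\in\mathbb N$ let $W^\ell_p(K)$, $W^{\ell-1}_p(K)$ be spaces of smooth forms on $\overline K$ of degree $\ell$, $\ell-1$; set $\mathring W^k_p=\{v\in\mathring H(\mathsf d,\Omega,\Lambda^k):v|_K\in W^k_p(K)\ \forall K\}$, $k=\ell-1,\ell$. For each $K$ let $X(K,\Lambda^\ell)$, $S(K,\Lambda^{\ell-1})$, $S(K,\Lambda^\ell)$ be Hilbert spaces of forms on $K$ with $W^\ell_p(K)\subset X(K,\Lambda^\ell)$ and $W^{\ell-1}_p(K)\subset S(K,\Lambda^{\ell-1})$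 for all $p$. Global spaces: $X(\Lambda^\ell)=\{v\in\mathring H(\mathsf d,\Omega,\Lambda^\ell):v|_K\in X(K,\Lambda^\ell)\ \forall K\}$ with $\|u\|_{X(\Lambda^\ell)}^2=\|u\|_{H(\mathsf d)}^2+\sum_K\|u|_K\|_{X(K,\Lambda^\ell)}^2$, and analogously $S(\Lambda^k)\subset\mathring H(\mathsf d,\Omega,\Lambda^k)$, $k=\ell-1,\ell$. Let $\tilde X_p(K)=\{u\in X(K,\Lambda^\ell):\mathsf d^\ell u\in\mathsf d^\ell W^\ell_p(K)\}$ and $\tilde X_p=\{u\in X(\Lambda^\ell):\mathsf d^\ell u\in\mathsf d^\ell\mathring W^\ell_p\}$, and assume continuous embeddings $\tilde X_p(K)\subset S(K,\Lambda^\ell)\subset X(K,\Lambda^\ell)$ for all $p$ (hence $\tilde X_p\subset S(\Lambda^\ell)\subset X(\Lambda^\ell)$). (A4) For every $K$ there are linear maps $R_{\ell,K}$ ($\ell$-forms to $(\ell-1)$-forms) and $R_{\ell+1,K}$ ($(\ell+1)$-forms to $\ell$-forms) on smooth forms on $K$ extending to bounded operators $R_{\ell+1,K}:L^2(K,\Lambda^{\ell+1})\to X(K,\Lambda^\ell)$, $R_{\ell,K}:X(K,\Lambda^\ell)\to S(K,\Lambda^{\ell-1})$, with $\mathsf d^{\ell-1}R_{\ell,K}+R_{\ell+1,K}\mathsf d^\ell=\mathrm{Id}$ on $X(K,\Lambda^\ell)$. (A5) $R_{\ell+1,K}\circ\mathsf d^\ell$ maps $W^\ell_p(K)$ into $W^\ell_p(K)$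 for all $K,p$. (A6) For all $K,p$ there are continuous linear projections $\pi^{\ell-1}_{p,K}:S(K,\Lambda^{\ell-1})\to W^{\ell-1}_p(K)$ and $\pi^\ell_{p,K}:S(K,\Lambda^\ell)\to W^\ell_p(K)$ (onto, idempotent). (A7) $\mathsf d^{\ell-1}$ maps $S(K,\Lambda^{\ell-1})$ into $S(K,\Lambda^\ell)$ and $\pi^\ell_{p,K}\mathsf d^{\ell-1}=\mathsf d^{\ell-1}\pi^{\ell-1}_{p,K}$ on $S(K,\Lambda^{\ell-1})$. (A8) There is $\varepsilon_{\ell-1}:\mathbb N\to\mathbb R^+$ with $\varepsilon_{\ell-1}(p)\to0$ such that $\|\mathsf d^{\ell-1}(\phi-\pi^{\ell-1}_{p,K}\phi)\|_{L^2(K)}\le\varepsilon_{\ell-1}(p)\|\phi\|_{S(K,\Lambda^{\ell-1})}$ for all $\phi\in S(K,\Lambda^{\ell-1})$, all $K$. Conformity condition: for $u\in\tilde X_p(K)$ and every $m$-dimensional facet $F$ of $K$ with $\ell\le m\le d$, vanishing trace of $u$ on $F$ implies vanishing trace of $\pi^\ell_{p,K}u$ on $F$, and analogously for $\pi^{\ell-1}_{p,K}$; consequently the elementwise definitions $(\Pi^k_pu)|_K=\pi^k_{p,K}(u|_K)$ give global linear projections $\Pi^\ell_p:S(\Lambda^\ell)\to\mathring W^\ell_p$ and $\Pi^{\ell-1}_p:S(\Lambda^{\ell-1})\to\mathring W^{\ell-1}_p$. *)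

(* Defs.v *)
From mathcomp Require Import all_boot all_order all_algebra.
From mathcomp Require Import all_classical all_reals all_analysis.
Set Implicit Arguments. Unset Strict Implicit. Unset Printing Implicit Defensive.
Import Order.TTheory GRing.Theory Num.Theory.
Local Open Scope classical_set_scope.
Local Open Scope ring_scope.

Definition lin_subspace (R : numDomainType) (V : lmodType R) (A : set V) : Prop :=
  A 0 /\ forall (a : R) (x y : V), A x -> A y -> A (a *: x + y).

Definition linear_on (R : numDomainType) (V W : lmodType R) (A : set V)
  (f : V -> W) : Prop :=
  forall (a : R) (x y : V), A x -> A y -> f (a *: x + y) = a *: f x + f y.

Definition norm_on (R : numDomainType) (V : lmodType R) (A : set V)
  (n : V -> R) : Prop :=
  lin_subspace A /\
  (forall x, A x -> 0 <= n x) /\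
  (forall x, A x -> n x = 0 -> x = 0) /\
  (forall (a : R) x, A x -> n (a *: x) = `|a| * n x) /\
  (forall x y, A x -> A y -> n (x + y) <= n x + n y).

(* A is a linear subspace of the product space  forall i, F i  (pointwise
   operations); used for global forms = families of their restrictions. *)
Definition family_subspace (R : numDomainType) (I : Type)
  (F : I -> lmodType R) (A : set (forall i, F i)) : Prop :=
  A (fun i => 0) /\
  forall (a : R) (u v : forall i, F i), A u -> A v ->
    A (fun i => a *: u i + v i).

(* Main.v *)
Require Import Defs.
From mathcomp Require Import all_boot all_order all_algebra.
From mathcomp Require Import all_classical all_reals all_analysis.
Import Order.TTheory GRing.Theory Num.Theory.
Local Open Scope classical_set_scope.
Local Open Scope ring_scope.

(* I      : the finite set of cells K of the partition M of Omega.
   F0/F1/F2 K : L^2(K, Lambda^(l-1)), L^2(K, Lambda^l), L^2(K, Lambda^(l+1)).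
   D0/D1 K : H(d,K,Lambda^(l-1)), H(d,K,Lambda^l) (domains of d on K);
   d0/d1 K : the exterior derivatives d^(l-1), d^l on K.
   A global k-form on Omega is the family of its restrictions to the cells;
   Hr0/Hr1 : the subspaces Hring(d,Omega,Lambda^(l-1)), Hring(d,Omega,Lambda^l).
   R0 K = R_(l,K),  R1 K = R_(l+1,K).  pi0 p K, pi1 p K : the projections. *)
Theorem lemma3p1 (R : realType) (I : finType)
  (F0 F1 F2 : I -> normedModType R)
  (D0 : forall K, set (F0 K)) (D1 : forall K, set (F1 K))
  (d0 : forall K, F0 K -> F1 K) (d1 : forall K, F1 K -> F2 K)
  (Hr0 : set (forall K, F0 K)) (Hr1 : set (forall K, F1 K))
  (X S1 : forall K, set (F1 K)) (S0 : forall K, set (F0 K))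
  (nX nS1 : forall K, F1 K -> R) (nS0 : forall K, F0 K -> R)
  (W0 : nat -> forall K, set (F0 K)) (W1 : nat -> forall K, set (F1 K))
  (R0 : forall K, F1 K -> F0 K) (R1 : forall K, F2 K -> F1 K)
  (pi0 : nat -> forall K, F0 K -> F0 K) (pi1 : nat -> forall K, F1 K -> F1 K)
  (eps : nat -> R)
  (* the exterior derivative on cells: linear on its domain *)
  (hD0 : forall K, lin_subspace (D0 K)) (hD1 : forall K, lin_subspace (D1 K))
  (hd0 : forall K, linear_on (D0 K) (d0 K))
  (hd1 : forall K, linear_on (D1 K) (d1 K))
  (* global spaces Hring(d): subspaces of piecewise H(d) forms *)
  (hHr0 : family_subspace Hr0) (hHr1 : family_subspace Hr1)
  (hHr0D : forall u, Hr0 u -> forall K, D0 K (u K))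
  (hHr1D : forall u, Hr1 u -> forall K, D1 K (u K))
  (* the Hilbert spaces X(K), S(K) and their norms *)
  (hX : forall K, norm_on (X K) (nX K))
  (hS0 : forall K, norm_on (S0 K) (nS0 K))
  (hS1 : forall K, norm_on (S1 K) (nS1 K))
  (hXD : forall K x, X K x -> D1 K x)
  (hS0D : forall K x, S0 K x -> D0 K x)
  (* spaces of smooth forms *)
  (hW0 : forall p K, lin_subspace (W0 p K)) (hW1 : forall p K, lin_subspace (W1 p K))
  (hW1X : forall p K w, W1 p K w -> X K w)
  (hW0S : forall p K w, W0 p K w -> S0 K w)
  (* continuous embeddings  Xtilde_p(K) c S(K,Lambda^l) c X(K,Lambda^l) *)
  (hS1X : forall K, (forall x, S1 K x -> X K x) /\
           exists c : R, forall x, S1 K x -> nX K x <= c * nS1 K x)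
  (hXtS : forall p K, exists c : R, forall x, X K x ->
           (exists w, W1 p K w /\ d1 K x = d1 K w) ->
           S1 K x /\ nS1 K x <= c * nX K x)
  (* (A4) *)
  (hR1 : forall K, linear_on setT (R1 K) /\ (forall v, X K (R1 K v)) /\
          exists c : R, forall v, nX K (R1 K v) <= c * `|v|)
  (hR0 : forall K, linear_on (X K) (R0 K) /\ (forall u, X K u -> S0 K (R0 K u)) /\
          exists c : R, forall u, X K u -> nS0 K (R0 K u) <= c * nX K u)
  (hA4 : forall K u, X K u -> d0 K (R0 K u) + R1 K (d1 K u) = u)
  (* (A5) *)
  (hA5 : forall p K w, W1 p K w -> W1 p K (R1 K (d1 K w)))
  (* (A6) *)
  (hA6_0 : forall p K, linear_on (S0 K) (pi0 p K) /\
            (forall x, S0 K x -> W0 p K (pi0 p K x)) /\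
            (forall w, W0 p K w -> pi0 p K w = w) /\
            exists c : R, forall x, S0 K x -> nS0 K (pi0 p K x) <= c * nS0 K x)
  (hA6_1 : forall p K, linear_on (S1 K) (pi1 p K) /\
            (forall x, S1 K x -> W1 p K (pi1 p K x)) /\
            (forall w, W1 p K w -> pi1 p K w = w) /\
            exists c : R, forall x, S1 K x -> nS1 K (pi1 p K x) <= c * nS1 K x)
  (* (A7) *)
  (hA7 : forall p K phi, S0 K phi ->
          S1 K (d0 K phi) /\ pi1 p K (d0 K phi) = d0 K (pi0 p K phi))
  (* (A8) *)
  (heps_pos : forall p, 0 < eps p)
  (heps_lim : eps @ \oo --> 0)
  (hA8 : forall p K phi, S0 K phi ->
          `|d0 K (phi - pi0 p K phi)| <= eps p * nS0 K phi)
  (* conformity: the elementwise projections are global projections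
     S(Lambda^k) -> Wring^k_p *)
  (hconf1 : forall p (u : forall K, F1 K), Hr1 u -> (forall K, S1 K (u K)) ->
             Hr1 (fun K => pi1 p K (u K)))
  (hconf0 : forall p (u : forall K, F0 K), Hr0 u -> (forall K, S0 K (u K)) ->
             Hr0 (fun K => pi0 p K (u K))) :
  exists C : R, 0 < C /\
    forall (p : nat) (u : forall K, F1 K),
      (* u in Xtilde_p : u in X(Lambda^l) and d u in d Wring^l_p *)
      Hr1 u -> (forall K, X K (u K)) ->
      (exists w : forall K, F1 K, Hr1 w /\ (forall K, W1 p K (w K)) /\
                                  (forall K, d1 K (u K) = d1 K (w K))) ->
      (* ||u - Pi u||_{L^2(Omega)} <= C eps(p) ||u||_{X(Lambda^l)} *)
      Num.sqrt (\sum_(K : I) `|u K - pi1 p K (u K)| ^+ 2)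
        <= C * eps p *
           Num.sqrt (\sum_(K : I) (`|u K| ^+ 2 + `|d1 K (u K)| ^+ 2 + nX K (u K) ^+ 2)).
Proof.
have hc : forall K, exists c : R, forall x, X K x -> nS0 K (R0 K x) <= c * nX K x.
  by move=> K; case: (hR0 K) => _ [_ h].
case: (choice hc) => c hcK.
set C := 1 + \sum_(K : I) `|c K|.
have C0 : 0 < C.
  rewrite /C; apply: (lt_le_trans ltr01); rewrite lerDl.
  by apply: sumr_ge0 => K _.
have cC : forall K, c K <= C.
  move=> K; apply: (le_trans (ler_norm (c K))); rewrite /C.
  have hS : `|c K| <= \sum_(K : I) `|c K|.
    by rewrite (bigD1 K) //= lerDl; apply: sumr_ge0 => *.
  by apply: (le_trans hS); rewrite /C lerDr.
exists C; split => // p u Hu HX [w [Hw [HW Hdw]]].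
have cell : forall K, `|u K - pi1 p K (u K)| <= C * eps p * nX K (u K).
  move=> K.
  have XuK := HX K.
  have nX0 : 0 <= nX K (u K) by case: (hX K) => _ [h _]; apply: h.
  set phi := R0 K (u K).
  set v := R1 K (d1 K (u K)).
  have S0phi : S0 K phi by case: (hR0 K) => _ [h _]; apply: h.
  have Wv : W1 p K v by rewrite /v Hdw; apply: hA5.
  have Xv : X K v by apply: hW1X Wv.
  have S1v : S1 K v.
    by case: (hXtS p K) => c' H; case: (H v Xv); [exists v; split|].
  have [S1dphi pid] := hA7 p K phi S0phi.
  have Hu' : u K = 1 *: d0 K phi + v by rewrite scale1r; apply/esym/hA4.
  case: (hA6_1 p K) => lin1 [_ [idW _]].
  case: (hA6_0 p K) => _ [pW0 _].
  have Hpu : pi1 p K (u K) = d0 K (pi0 p K phi) + v.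
    by rewrite Hu' lin1 // scale1r pid idW.
  have D0phi := hS0D K _ S0phi.
  have D0pphi : D0 K (pi0 p K phi) by apply: hS0D; apply: hW0S; apply: pW0.
  have Hdiff : u K - pi1 p K (u K) = d0 K (phi - pi0 p K phi).
    have -> : phi - pi0 p K phi = (-1) *: pi0 p K phi + phi.
      by rewrite scaleN1r addrC.
    rewrite hd0 // scaleN1r Hpu Hu' scale1r.
    by rewrite opprD addrACA subrr addr0 addrC.
  rewrite Hdiff; apply: (le_trans (hA8 p K phi S0phi)).
  rewrite (mulrC C) -mulrA; apply: ler_wpM2l; first exact: ltW.
  apply: (le_trans (hcK K _ XuK)); by apply: ler_wpM2r.
have Ce0 : 0 <= C * eps p by apply: mulr_ge0; apply: ltW.
have -> : C * eps p * Num.sqrt (\sum_K (`|u K| ^+ 2 + `|d1 K (u K)| ^+ 2 + nX K (u K) ^+ 2))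
   = Num.sqrt ((C * eps p) ^+ 2 * \sum_K (`|u K| ^+ 2 + `|d1 K (u K)| ^+ 2 + nX K (u K) ^+ 2)).
  by rewrite sqrtrM ?sqrtr_sqr ?ger0_norm // sqr_ge0.
apply: ler_wsqrtr.
rewrite mulr_sumr; apply: ler_sum => K _.
have nX0 : 0 <= nX K (u K) by case: (hX K) => _ [h _]; apply: h.
apply: (le_trans (y := (C * eps p) ^+ 2 * nX K (u K) ^+ 2)).
  rewrite -exprMn !expr2; apply: ler_pM => //; exact: cell.
apply: ler_wpM2l; first exact: sqr_ge0.
by rewrite lerDr.
Qed.
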